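(* Let $\alpha:\{0,1,2,\dots\}\times[0,\infty)\to[0,\infty)$ be nondecreasing (and locally Lipschitz-continuous) in its second argument. Let $(\beta_n)_{n\ge0}$ and $(g_n)_{n\ge0}$ be nonnegative sequences of real numbers, and let $(h_n)_{n\ge0}$, $(\gamma_n)_{n\ge0}$ be real sequences with $h_n>0$ and $0<h_n\gamma_n<1$, such that $$\frac{g_{n+1}-g_n}{h_n}\le -\gamma_n g_n+\alpha(n,g_n)+\beta_n,\qquad n\ge 0,$$ or, equivalently, $g_{n+1}\le g_n(1-h_n\gamma_n)+h_n\alpha(n,g_n)+h_n\beta_n$. If there is a sequence of positive numbers $(\mu_n)_{n\ge 0}$ such that $$\alpha\Big(n,\frac{1}{\mu_n}\Big)+\beta_n\le \frac{1}{\mu_n}\Big(\gamma_n-\frac{\mu_{n+1}-\mu_n}{\mu_n h_n}\Big)\quad\forall n\ge0,\qquad g_0\le \frac{1}{\mu_0},$$ then $$0\le g_n\le \frac{1}{\mu_n},\qquad \forall n\ge 0.$$ Therefore, if $\lim_{n\to\infty}\mu_n=\infty$, then $\lim_{n\to\infty}g_n=0$. *)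

(* Defs.v *)
From Stdlib Require Import Reals.
From Coquelicot Require Import Coquelicot.
Open Scope R_scope.

Definition nondecr_on_nonneg (f : R -> R) : Prop :=
  forall x y, 0 <= x -> x <= y -> f x <= f y.

Definition loc_lipschitz_on_nonneg (f : R -> R) : Prop :=
  forall x0, 0 <= x0 -> exists L delta, 0 < delta /\
    forall x y, 0 <= x -> 0 <= y -> Rabs (x - x0) < delta -> Rabs (y - x0) < delta ->
      Rabs (f x - f y) <= L * Rabs (x - y).

(* Main.v *)
Require Import Defs.
From Stdlib Require Import Reals Lra.
From Coquelicot Require Import Coquelicot.
Open Scope R_scope.

Lemma key (m m' : R) : 0 < m -> 0 < m' ->
  1/m - (m' - m)/(m*m) <= 1/m'.
Proof.
  intros Hm Hm'.
  assert (E: 1/m' - (1/m - (m' - m)/(m*m)) = (m' - m)^2/(m*m*m')) by (field; lra).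
  assert (0 <= (m' - m)^2/(m*m*m')).
  { apply Rdiv_le_0_compat. apply pow2_ge_0. apply Rmult_lt_0_compat; [nra|lra]. }
  lra.
Qed.

Theorem theorem3
  (alpha : nat -> R -> R) (beta g h gamma mu : nat -> R)
  (Halpha_nonneg : forall n x, 0 <= x -> 0 <= alpha n x)
  (Halpha_mono : forall n, nondecr_on_nonneg (alpha n))
  (Halpha_lip : forall n, loc_lipschitz_on_nonneg (alpha n))
  (Hbeta : forall n, 0 <= beta n)
  (Hg : forall n, 0 <= g n)
  (Hh : forall n, 0 < h n)
  (Hhg : forall n, 0 < h n * gamma n /\ h n * gamma n < 1)
  (Hrec : forall n, (g (S n) - g n) / h n <= - gamma n * g n + alpha n (g n) + beta n)
  (Hmu : forall n, 0 < mu n)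
  (Hmu_cond : forall n,
      alpha n (1 / mu n) + beta n
      <= (1 / mu n) * (gamma n - (mu (S n) - mu n) / (mu n * h n)))
  (Hg0 : g 0%nat <= 1 / mu 0%nat) :
  (forall n, 0 <= g n /\ g n <= 1 / mu n) /\
  (is_lim_seq mu p_infty -> is_lim_seq g 0).
Proof.
  assert (B : forall n, g n <= 1 / mu n).
  { induction n as [|n IH]; [exact Hg0|].
    pose proof (Hh n) as hn. pose proof (Hmu n) as mn. pose proof (Hmu (S n)) as mn'.
    destruct (Hhg n) as [H1 H2].
    pose proof (Hrec n) as R0. pose proof (Hmu_cond n) as C.
    pose proof (Halpha_mono n (g n) (1/mu n) (Hg n) IH) as A.
    set (a := 1 / mu n) in *.
    assert (R1 : g (S n) <= g n + h n * (- gamma n * g n + alpha n (g n) + beta n)).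
    { apply Rmult_le_compat_l with (r := h n) in R0; [|lra].
      replace (h n * ((g (S n) - g n) / h n)) with (g (S n) - g n) in R0 by (field; lra).
      lra. }
    assert (R2 : g n * (1 - h n * gamma n) <= a * (1 - h n * gamma n))
      by (apply Rmult_le_compat_r; lra).
    assert (R3 : h n * (alpha n (g n) + beta n) <= h n * (alpha n a + beta n))
      by (apply Rmult_le_compat_l; lra).
    assert (R4 : h n * (alpha n a + beta n) <= h n * (a * (gamma n - (mu (S n) - mu n) / (mu n * h n))))
      by (apply Rmult_le_compat_l; lra).
    assert (E : a * (1 - h n * gamma n) + h n * (a * (gamma n - (mu (S n) - mu n) / (mu n * h n)))
               = 1/mu n - (mu (S n) - mu n)/(mu n * mu n)) by (unfold a; field; lra).
    pose proof (key (mu n) (mu (S n)) mn mn').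
    nra. }
  split; [intro n; split; auto|].
  intro Hl.
  apply is_lim_seq_le_le with (u := fun _ => 0) (w := fun n => 1 / mu n).
  - intro n; split; auto.
  - apply is_lim_seq_const.
  - apply is_lim_seq_ext with (u := fun n => / mu n).
    + intro n; unfold Rdiv; ring.
    + replace (Finite 0) with (Rbar_inv p_infty) by reflexivity.
      apply is_lim_seq_inv; auto. discriminate.
Qed.
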